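(* Let $n\ge d$, $\mathbf X\in\mathbb R^{n\times d}$ with full column rank, $1\le k<d$, $\lambda>0$, and $\mathbf y\in\mathbb R^n$ with $\hat\sigma_{1:k}=\|(\mathbf I-\mathbf P_{-1:k})\mathbf y\|>0$; let $\hat{\mathbf y}_{1:k}=\mathbf P_{-1:k}\mathbf y$, $\mathbf u=\mathbf V^T(\mathbf y-\hat{\mathbf y}_{1:k})/\hat\sigma_{1:k}$, and let $\hat{\boldsymbol\beta}^\lambda=\arg\min_{\boldsymbol\beta\in\mathbb R^d}\big(\frac1{2n}\|\mathbf y-\mathbf X\boldsymbol\beta\|_2^2+\lambda(\|\boldsymbol\beta_{1:k}\|_2+\|\boldsymbol\beta_{-1:k}\|_1)\big)$. For $\mathbf b\in\mathbb R^k$ and $\boldsymbol\epsilon$ in the closed unit ball of $\mathbb R^k$ define $$\hat{\boldsymbol\beta}^\lambda_{-1:k}(\mathbf b)=\arg\min_{\boldsymbol\gamma\in\mathbb R^{d-k}}\Big(\tfrac1{2n}\|\mathbf y-\mathbf X_{1:k}\mathbf b-\mathbf X_{-1:k}\boldsymbol\gamma\|_2^2+\lambda\|\boldsymbol\gamma\|_1\Big),$$ $$\Lambda_{1:k}(\mathbf b,\boldsymbol\epsilon)=\frac1{\hat\sigma_{1:k}}(\mathbf X_{1:k}^T\mathbf V_{1:k})^{-1}\Big(-\mathbf X_{1:k}^T\big(\hat{\mathbf y}_{1:k}-\mathbf X_{1:k}\mathbf b-\mathbf X_{-1:k}\hat{\boldsymbol\beta}^\lambda_{-1:k}(\mathbf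 b)\big)+n\lambda\boldsymbol\epsilon\Big),$$ and let $f^{-1}(\mathbf b)=\{\Lambda_{1:k}(\mathbf b,\mathbf b/\|\mathbf b\|)\}$ if $\mathbf b\ne\mathbf 0$ and $f^{-1}(\mathbf 0)=\{\Lambda_{1:k}(\mathbf 0,\boldsymbol\epsilon):\|\boldsymbol\epsilon\|\le1\}$. Then the function $f:\mathbb R^k\to\mathbb R^k$ with this inverse satisfies $\hat{\boldsymbol\beta}^\lambda_{1:k}=f(\mathbf u_{1:k})$; i.e., for every $\mathbf b\in\mathbb R^k$, $\hat{\boldsymbol\beta}^\lambda_{1:k}=\mathbf b$ if and only if $\mathbf u_{1:k}\in f^{-1}(\mathbf b)$.
   Context: $\mathbf A_i$, $\mathbf A_{1:i}$, $\mathbf A_{-1:i}$ denote the $i$-th column, first $i$ columns, and submatrix with first $i$ columns removed (similarly for vector entries). $\mathbf P_{-1:i}$ is the orthogonal projection onto the column space of $\mathbf X_{-1:i}$. $\mathbf V\in\mathbb R^{n\times(n-d+k)}$ has orthonormal columns spanning the orthogonal complement of the column space of $\mathbf X_{-1:k}$, with first $k$ columns $\mathbf V_i=(\mathbf I-\mathbf P_{-1:i})\mathbf X_i/\|(\mathbf I-\mathbf P_{-1:i})\mathbf X_i\|$. Both minimizers above are unique since $\mathbf X$ and $\mathbf X_{-1:k}$ have full column rank. *)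

(* Defs.v *)
From HB Require Import structures.
From mathcomp Require Import all_boot all_order all_algebra.
From mathcomp Require Import reals.
From Stdlib Require Import ClassicalEpsilon.
Set Implicit Arguments. Unset Strict Implicit. Unset Printing Implicit Defensive.
Import Order.TTheory GRing.Theory Num.Theory.
Local Open Scope ring_scope.

Section Defs.
Variable R : realType.

Definition vnorm (p : nat) (v : 'cV[R]_p) : R := Num.sqrt (\sum_i v i 0 ^+ 2).

Definition l1norm (p : nat) (v : 'cV[R]_p) : R := \sum_i `|v i 0|.

(* P is the orthogonal projection onto the column space of A:
   symmetric, idempotent, with the same column space as A. *)
Definition is_oproj (n r : nat) (A : 'M[R]_(n, r)) (P : 'M[R]_n) : Prop :=
  P^T = P /\ P *m P = P /\ (P^T == A^T)%MS.

Definition oproj (n r : nat) (A : 'M[R]_(n, r)) : 'M[R]_n :=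
  epsilon (inhabits 0) (is_oproj A).

(* A with the columns outside S replaced by zero: its column space is the
   span of the columns of A indexed by S. *)
Definition colmask (n d : nat) (S : pred 'I_d) (A : 'M[R]_(n, d)) : 'M[R]_(n, d) :=
  \matrix_(i, j) (if S j then A i j else 0).

(* P_{-1:i}: orthogonal projection onto the span of the columns of X with the
   first i columns removed (i.e. the columns of 0-based index >= i). *)
Definition Pminus (n d : nat) (X : 'M[R]_(n, d)) (i : nat) : 'M[R]_n :=
  oproj (colmask (fun j : 'I_d => (i <= j)%N) X).

Definition is_argmin (T : Type) (F : T -> R) (x : T) : Prop :=
  forall z, F x <= F z.

Definition mixed_obj (n k m : nat) (X : 'M[R]_(n, k + m)) (y : 'cV[R]_n)
  (lam : R) (beta : 'cV[R]_(k + m)) : R :=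
  (2 * n%:R)^-1 * vnorm (y - X *m beta) ^+ 2
  + lam * (vnorm (usubmx beta) + l1norm (dsubmx beta)).

Definition partial_obj (n k m : nat) (X : 'M[R]_(n, k + m)) (y : 'cV[R]_n)
  (lam : R) (b : 'cV[R]_k) (g : 'cV[R]_m) : R :=
  (2 * n%:R)^-1 * vnorm (y - lsubmx X *m b - rsubmx X *m g) ^+ 2
  + lam * l1norm g.

End Defs.

(* Main.v *)
Require Import Defs.
From HB Require Import structures.
From mathcomp Require Import all_boot all_order all_algebra.
From mathcomp Require Import reals.
From mathcomp Require Import ring lra zify.
From Stdlib Require Import ClassicalEpsilon.
Set Implicit Arguments. Unset Strict Implicit. Unset Printing Implicit Defensive.
Import Order.TTheory GRing.Theory Num.Theory.
Local Open Scope ring_scope.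

Section Aux.
Variable R : realType.

Definition dot (p : nat) (u v : 'cV[R]_p) : R := (u^T *m v) 0 0.

Lemma dotE p (u v : 'cV[R]_p) : dot u v = \sum_i u i 0 * v i 0.
Proof. by rewrite /dot mxE; apply: eq_bigr => i _; rewrite mxE. Qed.

Lemma dotC p (u v : 'cV[R]_p) : dot u v = dot v u.
Proof. by rewrite !dotE; apply: eq_bigr => i _; rewrite mulrC. Qed.

Lemma dotDl p (u v w : 'cV[R]_p) : dot (u + v) w = dot u w + dot v w.
Proof. by rewrite !dotE -big_split; apply: eq_bigr => i _; rewrite !mxE mulrDl. Qed.

Lemma dotNl p (u w : 'cV[R]_p) : dot (- u) w = - dot u w.
Proof. by rewrite !dotE -sumrN; apply: eq_bigr => i _; rewrite !mxE mulNr. Qed.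

Lemma dotBl p (u v w : 'cV[R]_p) : dot (u - v) w = dot u w - dot v w.
Proof. by rewrite dotDl dotNl. Qed.

Lemma dotZl p a (u w : 'cV[R]_p) : dot (a *: u) w = a * dot u w.
Proof. by rewrite !dotE mulr_sumr; apply: eq_bigr => i _; rewrite !mxE mulrA. Qed.

Lemma dotDr p (u v w : 'cV[R]_p) : dot w (u + v) = dot w u + dot w v.
Proof. by rewrite dotC dotDl !(dotC w). Qed.
Lemma dotBr p (u v w : 'cV[R]_p) : dot w (u - v) = dot w u - dot w v.
Proof. by rewrite dotC dotBl !(dotC w). Qed.
Lemma dotZr p a (u w : 'cV[R]_p) : dot w (a *: u) = a * dot w u.
Proof. by rewrite dotC dotZl dotC. Qed.
Lemma dot0r p (u : 'cV[R]_p) : dot u 0 = 0.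
Proof. by rewrite dotE big1 // => i _; rewrite mxE mulr0. Qed.

Lemma dot_tr n p (A : 'M[R]_(n, p)) u v : dot (A^T *m u) v = dot u (A *m v).
Proof. by rewrite /dot trmx_mul trmxK mulmxA. Qed.

Lemma dot_ge0 p (u : 'cV[R]_p) : 0 <= dot u u.
Proof. by rewrite dotE sumr_ge0 // => i _; rewrite -expr2 sqr_ge0. Qed.

Lemma dot_eq0 p (u : 'cV[R]_p) : dot u u = 0 -> u = 0.
Proof.
rewrite dotE => H; apply/matrixP => i j; rewrite ord1 mxE.
have hge : forall i : 'I_p, true -> 0 <= u i 0 * u i 0.
  by move=> l _; rewrite -expr2 sqr_ge0.
have := psumr_eq0P hge H (i:=i) isT.
by move/eqP; rewrite mulf_eq0 orbb => /eqP.
Qed.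

Lemma vnorm2 p (u : 'cV[R]_p) : vnorm u ^+ 2 = dot u u.
Proof.
rewrite /vnorm sqr_sqrtr; last by rewrite sumr_ge0 // => i _; rewrite sqr_ge0.
by rewrite dotE; apply: eq_bigr => i _; rewrite expr2.
Qed.

Lemma vnorm_ge0 p (u : 'cV[R]_p) : 0 <= vnorm u.
Proof. exact: sqrtr_ge0. Qed.

Lemma vnorm_eq0 p (u : 'cV[R]_p) : vnorm u = 0 -> u = 0.
Proof. by move=> H; apply: dot_eq0; rewrite -vnorm2 H expr0n. Qed.

Lemma vnorm0 p : vnorm (0 : 'cV[R]_p) = 0.
Proof.
apply/eqP; rewrite -(@eqrXn2 _ 2) //; last exact: vnorm_ge0.
by rewrite vnorm2 dot0r expr0n.
Qed.

Lemma sq_le (x y : R) : 0 <= x -> 0 <= y -> x ^+ 2 <= y ^+ 2 -> x <= y.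
Proof. by move=> hx hy; rewrite ler_pXn2r // nnegrE. Qed.

Lemma sq_eq (x y : R) : 0 <= x -> 0 <= y -> x ^+ 2 = y ^+ 2 -> x = y.
Proof. by move=> hx hy H; apply/eqP; rewrite -(@eqrXn2 _ 2) // H. Qed.

Lemma vnormZ p a (u : 'cV[R]_p) : vnorm (a *: u) = `|a| * vnorm u.
Proof.
apply: sq_eq; rewrite ?vnorm_ge0 ?mulr_ge0 ?vnorm_ge0 //.
by rewrite exprMn !vnorm2 dotZl dotZr real_normK ?num_real // mulrA expr2.
Qed.

Lemma CS p (u v : 'cV[R]_p) : dot u v <= vnorm u * vnorm v.
Proof.
set s := vnorm u; set q := vnorm v.
have hs : 0 <= s by exact: vnorm_ge0.
have hq : 0 <= q by exact: vnorm_ge0.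
have H := dot_ge0 (q *: u - s *: v).
rewrite dotBl !dotBr !dotZl !dotZr -!vnorm2 -/s -/q (dotC v u) in H.
have [hsq|hsq] := eqVneq (s * q) 0.
  move/eqP: hsq; rewrite mulf_eq0 => /orP [] /eqP h.
    by rewrite (vnorm_eq0 h) dotC dot0r h mul0r.
  by rewrite (vnorm_eq0 h) dot0r h mulr0.
have hp : 0 < s * q by rewrite lt_def hsq mulr_ge0.
have : 0 <= s * q * (2 * (s * q - dot u v)) by nra.
by rewrite pmulr_rge0 // => h; nra.
Qed.

Lemma vnormD p (u v : 'cV[R]_p) : vnorm (u + v) <= vnorm u + vnorm v.
Proof.
apply: sq_le; rewrite ?addr_ge0 ?vnorm_ge0 //.
rewrite vnorm2 dotDl !dotDr (dotC v u) sqrrD -!vnorm2.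
have := CS u v; lra.
Qed.

End Aux.

Section Aux2.
Variable R : realType.

Definition convexf p (phi : 'cV[R]_p -> R) :=
  forall z z' (t : R), 0 < t <= 1 -> phi (z + t *: (z' - z)) <= phi z + t * (phi z' - phi z).

Definition Qf n p (c : 'cV[R]_n) (A : 'M[R]_(n, p)) z :=
  (2 * n%:R)^-1 * vnorm (c - A *m z) ^+ 2.

Lemma limit_le (a b c : R) : 0 <= c -> (forall t : R, 0 < t <= 1 -> a <= b + t * c) -> a <= b.
Proof.
move=> hc H; case: (lerP a b) => // hab.
have hd : 0 < a - b + c by lra.
set t := (a - b) / (a - b + c).
have htd : t * (a - b + c) = a - b by rewrite /t mulfVK // gt_eqF.
have ht0 : 0 < t by rewrite /t divr_gt0 // subr_gt0.
have ht1 : t <= 1 by rewrite /t ler_pdivrMr // mul1r; lra.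
have := H t; rewrite ht0 ht1 => /(_ isT) h.
have : t * (a - b) <= 0 by nra.
by rewrite pmulr_rle0 // subr_le0 => h'; lra.
Qed.

Lemma sub_step n p (A : 'M[R]_(n, p)) (c : 'cV[R]_n) z0 z t :
  c - A *m (z0 + t *: (z - z0)) = (c - A *m z0) - t *: (A *m (z - z0)).
Proof. by rewrite mulmxDr scalemxAr opprD addrA. Qed.

Lemma var_ineq n p (A : 'M[R]_(n, p)) c (phi : 'cV[R]_p -> R) z0 :
  (0 < n)%N -> convexf phi ->
  (forall z, Qf c A z0 + phi z0 <= Qf c A z + phi z) ->
  forall z, n%:R^-1 * dot (c - A *m z0) (A *m (z - z0)) <= phi z - phi z0.
Proof.
move=> n0 cv H z.
set r := c - A *m z0; set d := A *m (z - z0).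
have hN : 0 < (n%:R : R) by rewrite ltr0n.
set iN := (n%:R : R)^-1.
have hiN : 0 < iN by rewrite invr_gt0.
have h2 : (2 * (n%:R : R))^-1 = iN / 2 by rewrite invfM mulrC.
apply: (@limit_le _ _ (iN / 2 * dot d d)).
  by rewrite mulr_ge0 ?dot_ge0 // divr_ge0 // ltW.
move=> t /andP [ht0 ht1].
have := H (z0 + t *: (z - z0)).
have := cv z0 z t; rewrite ht0 ht1 => /(_ isT).
rewrite /Qf sub_step -/r -/d h2 !vnorm2; clearbody r d.
rewrite dotBl !dotBr !dotZl !dotZr (dotC d r).
move=> hc hm.
set Dl := phi z - phi z0.
have : 0 <= t * (Dl + t * (iN / 2 * dot d d) - iN * dot r d).
  have e : (t * (Dl + t * (iN / 2 * dot d d) - iN * dot r d) =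
     (iN / 2 * (dot r r - t * dot r d - (t * dot r d - t * (t * dot d d))) + (phi z0 + t * Dl))
     - (iN / 2 * dot r r + phi z0) :> R).
    by rewrite /Dl; field.
  rewrite e subr_ge0; apply: le_trans hm _.
  by rewrite lerD2l.
by rewrite pmulr_rge0 // subr_ge0 addrC.
Qed.

Lemma uniq_fit n p (A : 'M[R]_(n, p)) c (phi : 'cV[R]_p -> R) z1 z2 :
  (0 < n)%N -> convexf phi ->
  (forall z, Qf c A z1 + phi z1 <= Qf c A z + phi z) ->
  (forall z, Qf c A z2 + phi z2 <= Qf c A z + phi z) ->
  A *m z1 = A *m z2.
Proof.
move=> n0 cv H1 H2.
have hN : 0 < (n%:R : R) by rewrite ltr0n.
set iN := (n%:R : R)^-1.
have hiN : 0 < iN by rewrite invr_gt0.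
have h2 : (2 * (n%:R : R))^-1 = iN / 2 by rewrite invfM mulrC.
have hh : 0 < (2^-1 : R) <= 1 by rewrite invr_gt0 ltr0n /= invf_le1 ?ler1n.
have := H1 (z1 + 2^-1 *: (z2 - z1)).
have := H2 z1.
have := cv z1 z2 _ hh.
rewrite /Qf sub_step h2 !vnorm2.
have e : A *m (z2 - z1) = (c - A *m z1) - (c - A *m z2).
  by rewrite mulmxBr opprB (addrC (c - _)) addrA subrK.
have fin : (c - A *m z1) - (c - A *m z2) = 0 -> A *m z1 = A *m z2.
  move=> h; apply/eqP; rewrite eq_sym -subr_eq0; move: h.
  by rewrite opprB (addrC (c - _)) addrA subrK => ->.
rewrite e; move: fin; move: (c - A *m z1) (c - A *m z2) => r1 r2 fin.
rewrite ?dotBl ?dotBr ?dotZl ?dotZr ?dotBl ?dotBr ?dotZl ?dotZr (dotC r2 r1).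
move=> hc e1 e2.
apply: fin; apply: dot_eq0; apply/eqP; rewrite eq_le dot_ge0 andbT.
rewrite dotBl !dotBr (dotC r2 r1).
set K := iN / 2.
have hK : 0 < K by rewrite divr_gt0.
have : 0 <= K * (-(dot r1 r1 - dot r1 r2 - (dot r1 r2 - dot r2 r2))).
  rewrite /K; nra.
by rewrite pmulr_rge0 // oppr_ge0.
Qed.

End Aux2.

Section Aux3.
Variable R : realType.

Lemma inj_unit_row p (M : 'M[R]_p) :
  (forall v : 'rV[R]_p, v *m M = 0 -> v = 0) -> M \in unitmx.
Proof.
move=> H; rewrite -row_free_unit -kermx_eq0; apply/eqP/row_matrixP => i.
by rewrite row0; apply: H; rewrite -row_mul mulmx_ker row0.
Qed.

Lemma inj_unit_col p (M : 'M[R]_p) :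
  (forall v : 'cV[R]_p, M *m v = 0 -> v = 0) -> M \in unitmx.
Proof.
move=> H; rewrite -unitmx_tr; apply: inj_unit_row => v hv.
have := H v^T; rewrite -(trmxK M) -trmx_mul hv trmx0 => /(_ erefl) h.
by rewrite -(trmxK v) h trmx0.
Qed.

Lemma oproj_exists n r (A : 'M[R]_(n, r)) : exists P, is_oproj A P.
Proof.
set C := row_base A^T.
have hC : (C == A^T)%MS by apply/eqmxP; exact: eq_row_base.
have hCf : row_free C := row_base_free A^T.
clearbody C.
set G := C *m C^T.
have GT : G^T = G by rewrite /G trmx_mul trmxK.
have Gu : G \in unitmx.
  apply: inj_unit_row => v hv.
  have hz : v *m C = 0.
    apply: (can_inj (@trmxK _ _ _)); rewrite trmx0; apply: dot_eq0.
    by rewrite /dot trmxK trmx_mul !mulmxA -(mulmxA v) -/G hv !mul0mx mxE.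
  by apply: (row_free_inj hCf); rewrite hz mul0mx.
set P := C^T *m invmx G *m C.
have CP : C *m P = C by rewrite /P !mulmxA -/G mulmxV // mul1mx.
have PT : P^T = P by rewrite /P !trmx_mul trmxK trmx_inv GT mulmxA.
exists P; split=> //; split.
  by rewrite {1}/P -!mulmxA CP mulmxA.
rewrite PT; apply/andP; split.
  by apply: submx_trans (proj1 (andP hC)); rewrite /P submxMl.
apply: submx_trans (proj2 (andP hC)) _.
by rewrite -{1}CP submxMl.
Qed.

Lemma oproj_spec n r (A : 'M[R]_(n, r)) : is_oproj A (oproj A).
Proof. by rewrite /oproj; apply: epsilon_spec; apply: oproj_exists. Qed.

Lemma oproj_sym n r (A : 'M[R]_(n, r)) : (oproj A)^T = oproj A.
Proof. by case: (oproj_spec A). Qed.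

Lemma oproj_idem n r (A : 'M[R]_(n, r)) : oproj A *m oproj A = oproj A.
Proof. by case: (oproj_spec A) => _ []. Qed.

Lemma oproj_sub n r (A : 'M[R]_(n, r)) : ((oproj A)^T <= A^T)%MS.
Proof. by case: (oproj_spec A) => _ [] _ /andP []. Qed.

Lemma oproj_fix n r (A : 'M[R]_(n, r)) : oproj A *m A = A.
Proof.
case: (oproj_spec A) => hs [hi /andP [_ h]].
move: (oproj A) hs hi h => P hs hi h.
case/submxP: h => D hD.
have eA : A = P *m D^T by rewrite -[A]trmxK hD trmx_mul trmxK.
by rewrite eA mulmxA hi.
Qed.

Lemma row_colmask n d (S : pred 'I_d) (X : 'M[R]_(n, d)) j :
  row j (colmask S X)^T = if S j then row j X^T else 0.
Proof.
by apply/rowP => i; rewrite !mxE; case: (S j); rewrite ?mxE.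
Qed.

Lemma colmask_sub n d (S : pred 'I_d) (X : 'M[R]_(n, d)) :
  ((colmask S X)^T <= X^T)%MS.
Proof.
apply/row_subP => j; rewrite row_colmask; case: (S j); first exact: row_sub.
exact: sub0mx.
Qed.

End Aux3.

Section Aux4.
Variable R : realType.

Lemma subB_sub m1 m2 p (A B : 'M[R]_(m1, p)) (C : 'M[R]_(m2, p)) :
  (A <= C)%MS -> (B <= C)%MS -> (A - B <= C)%MS.
Proof. by move=> hA hB; rewrite -scaleN1r addmx_sub // scalemx_sub. Qed.

Variables (n k m q : nat) (X : 'M[R]_(n, k + m)) (V : 'M[R]_(n, k + q)).
Hypothesis hVV : V^T *m V = 1%:M.
Hypothesis hVX : V^T *m rsubmx X = 0.
Hypothesis hcol : forall c : 'I_k,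
     col (lshift _ c) V =
       (vnorm ((1%:M - Pminus X c.+1) *m col (lshift m c) X))^-1
         *: ((1%:M - Pminus X c.+1) *m col (lshift m c) X).

Lemma Vblocks : [/\ (lsubmx V)^T *m lsubmx V = 1%:M, (lsubmx V)^T *m rsubmx V = 0,
   (rsubmx V)^T *m lsubmx V = 0 & (rsubmx V)^T *m rsubmx V = 1%:M].
Proof.
have := hVV; rewrite -[V in V^T *m V]hsubmxK -[V in _ *m V]hsubmxK.
rewrite tr_row_mx mul_col_row (scalar_mx_block k q) => /eq_block_mx [].
by rewrite !row_mxKl !row_mxKr.
Qed.

Lemma VXblocks : (lsubmx V)^T *m rsubmx X = 0 /\ (rsubmx V)^T *m rsubmx X = 0.
Proof.
have := hVX; rewrite -[V]hsubmxK tr_row_mx mul_col_mx => /eqP.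
by rewrite col_mx_eq0 row_mxKl row_mxKr => /andP [/eqP -> /eqP ->].
Qed.

Lemma colV c : col (lshift q c) V = col c (lsubmx V).
Proof. by apply/colP => i; rewrite !mxE. Qed.

Lemma decompX (c : 'I_k) :
  col (lshift m c) X =
  vnorm ((1%:M - Pminus X c.+1) *m col (lshift m c) X) *: col c (lsubmx V)
  + Pminus X c.+1 *m col (lshift m c) X.
Proof.
rewrite -colV hcol; set w := (_ *m col (lshift m c) X).
have -> : vnorm w *: ((vnorm w)^-1 *: w) = w.
  have [h0|h0] := eqVneq (vnorm w) 0.
    by rewrite h0 scale0r (vnorm_eq0 h0).
  by rewrite scalerA mulfV // scale1r.
by rewrite /w mulmxBl mul1mx subrK.
Qed.

Lemma Pcol_sub (c : 'I_k) :
  ((Pminus X c.+1 *m col (lshift m c) X)^T <=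
     (colmask (fun j : 'I_(k + m) => (c.+1 <= j)%N) X)^T)%MS.
Proof.
rewrite trmx_mul; apply: submx_trans (oproj_sub _).
by rewrite oproj_sym submxMl.
Qed.

Lemma V1_sub : ((lsubmx V)^T <= X^T)%MS.
Proof.
apply/row_subP => c; rewrite -tr_col.
have := decompX c => e.
have hv : (col c (lsubmx V))^T = (vnorm ((1%:M - Pminus X c.+1) *m col (lshift m c) X))^-1 *:
   ((col (lshift m c) X)^T - (Pminus X c.+1 *m col (lshift m c) X)^T).
  rewrite -colV hcol linearZ /= mulmxBl mul1mx linearB.
  done.
rewrite hv scalemx_sub // subB_sub //.
  by rewrite tr_col row_sub.
apply: submx_trans (Pcol_sub c) _; exact: colmask_sub.
Qed.

Lemma X1V2 : (lsubmx X)^T *m rsubmx V = 0.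
Proof.
have [_ hV21 _ _] := Vblocks.
have [_ hV2X] := VXblocks.
set K := kermx (rsubmx V).
have key : forall t (j : 'I_(k + m)), (k - t <= j)%N -> ((col j X)^T <= K)%MS.
  elim=> [|t IH] j hj.
    rewrite subn0 in hj.
    case: (splitP j) => [j1 ej|j2 ej].
      by move: (ltn_ord j1); rewrite -ej ltnNge hj.
    have -> : col j X = col j2 (rsubmx X).
      by apply/colP => i; rewrite !mxE; congr (X i _); apply: val_inj; rewrite /= ej.
    apply/sub_kermxP; rewrite tr_col -row_mul.
    by rewrite -[rsubmx V]trmxK -trmx_mul hV2X trmx0 row0.
  case: (leqP (k - t) j) => h; first exact: IH.
  have hjk : (j < k)%N by apply: leq_trans h (leq_subr _ _).
  have ej1 : (j.+1 = k - t)%N.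
    by lia.
  pose c := Ordinal hjk.
  have -> : j = lshift m c by apply: val_inj.
  rewrite decompX linearD /= addmx_sub //.
    rewrite linearZ /= scalemx_sub //; apply/sub_kermxP.
    by rewrite tr_col -row_mul hV21 row0.
  apply: submx_trans (Pcol_sub c) _.
  apply/row_subP => j'; rewrite row_colmask.
  case: ifP => hj'; last exact: sub0mx.
  by rewrite -tr_col; apply: IH; rewrite -ej1.
apply/sub_kermxP; apply/row_subP => c; rewrite -tr_col.
have -> : col c (lsubmx X) = col (lshift m c) X by apply/colP => i; rewrite !mxE.
by apply: (key k); rewrite subnn.
Qed.

End Aux4.

Section Aux5.
Variable R : realType.

Lemma seg_eq p (z z' : 'cV[R]_p) (t : R) : z + t *: (z' - z) = (1 - t) *: z + t *: z'.
Proof. by apply/matrixP => i j; rewrite !mxE; ring. Qed.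

Lemma conv_vnorm p : convexf (@vnorm R p).
Proof.
move=> z z' t /andP [t0 t1]; rewrite seg_eq.
apply: le_trans (vnormD _ _) _.
have -> : vnorm z + t * (vnorm z' - vnorm z) = (1 - t) * vnorm z + t * vnorm z' by ring.
by rewrite !vnormZ !ger0_norm ?subr_ge0 // ltW.
Qed.

Lemma conv_l1 p : convexf (@l1norm R p).
Proof.
move=> z z' t /andP [t0 t1]; rewrite seg_eq /l1norm.
have -> : \sum_i `|z i 0| + t * (\sum_i `|z' i 0| - \sum_i `|z i 0|) =
   \sum_i ((1 - t) * `|z i 0| + t * `|z' i 0|).
  rewrite big_split /= -!mulr_sumr; ring.
apply: ler_sum => i _; rewrite !mxE.
apply: le_trans (ler_normD _ _) _.
have h1t : 0 <= 1 - t by rewrite subr_ge0.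
by rewrite !normrM (ger0_norm (ltW t0)) (ger0_norm h1t).
Qed.

Lemma conv_scale p (f : 'cV[R]_p -> R) c : 0 <= c -> convexf f -> convexf (fun z => c * f z).
Proof.
move=> c0 cf z z' t ht; have := cf z z' t ht => h.
have -> : c * f z + t * (c * f z' - c * f z) = c * (f z + t * (f z' - f z)) by ring.
by rewrite ler_wpM2l.
Qed.

Lemma conv_add p (f g : 'cV[R]_p -> R) : convexf f -> convexf g -> convexf (fun z => f z + g z).
Proof.
move=> cf cg z z' t ht; have := cf z z' t ht; have := cg z z' t ht => h1 h2.
lra.
Qed.

Lemma conv_usub p1 p2 (f : 'cV[R]_p1 -> R) : convexf f -> convexf (fun z : 'cV[R]_(p1 + p2) => f (usubmx z)).
Proof.
move=> cf z z' t ht.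
have -> : usubmx (z + t *: (z' - z)) = usubmx z + t *: (usubmx z' - usubmx z).
  by apply/matrixP => i j; rewrite !mxE.
exact: cf.
Qed.

Lemma conv_dsub p1 p2 (f : 'cV[R]_p2 -> R) : convexf f -> convexf (fun z : 'cV[R]_(p1 + p2) => f (dsubmx z)).
Proof.
move=> cf z z' t ht.
have -> : dsubmx (z + t *: (z' - z)) = dsubmx z + t *: (dsubmx z' - dsubmx z).
  by apply/matrixP => i j; rewrite !mxE.
exact: cf.
Qed.

Lemma subgrad (lam : R) p (w b : 'cV[R]_p) : 0 < lam ->
  (forall b', dot w (b' - b) <= lam * vnorm b' - lam * vnorm b) ->
  dot w b = lam * vnorm b /\ vnorm w <= lam.
Proof.
move=> l0 H.
have h1 := H 0; rewrite sub0r vnorm0 mulr0 dotC dotNl dotC in h1.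
have h2 := H (b + b); rewrite addrC addKr in h2.
have h3 := H (b + w); rewrite addrC addKr in h3.
have := vnormD b b; have := vnormD b w => d1 d2.
have hw0 := vnorm_ge0 w; have hb0 := vnorm_ge0 b.
split.
  apply/eqP; rewrite eq_le; apply/andP; split; nra.
rewrite -vnorm2 in h3.
nra.
Qed.

Lemma eps_unique p (e b : 'cV[R]_p) : b != 0 -> vnorm e <= 1 -> dot e b = vnorm b ->
  e = (vnorm b)^-1 *: b.
Proof.
move=> b0 e1 eb.
have s0 : vnorm b != 0 by apply: contra b0 => /eqP h; rewrite (vnorm_eq0 h).
have sp : 0 < vnorm b by rewrite lt_def s0 vnorm_ge0.
apply/eqP; rewrite -subr_eq0; apply/eqP; apply: dot_eq0; apply/eqP.
rewrite eq_le dot_ge0 andbT dotBl !dotBr !dotZl !dotZr (dotC b e) eb -!vnorm2.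
set s := vnorm b.
have he : vnorm e ^+ 2 <= 1 by rewrite -(expr1n _ 2) ler_pXn2r // ?nnegrE ?vnorm_ge0.
have -> : s^-1 * s - s^-1 * (s^-1 * s ^+ 2) = 0 by field.
have -> : s^-1 * s = 1 by rewrite mulVf.
lra.
Qed.

End Aux5.

Section Aux6.
Variable R : realType.
Variables (n k m : nat) (X : 'M[R]_(n, k + m)) (y : 'cV[R]_n) (lam : R)
  (beta : 'cV[R]_(k + m)) (gam : 'cV[R]_k -> 'cV[R]_m).
Hypothesis n0 : (0 < n)%N.
Hypothesis l0 : 0 < lam.
Hypothesis hrank : \rank X = (k + m)%N.
Hypothesis hbeta : is_argmin (mixed_obj X y lam) beta.
Hypothesis hgam : forall b : 'cV[R]_k, is_argmin (partial_obj X y lam b) (gam b).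

Let X1 := lsubmx X.
Let X2 := rsubmx X.
Let r b := y - X1 *m b - X2 *m gam b.

Lemma mixed_split b g :
  mixed_obj X y lam (col_mx b g) = partial_obj X y lam b g + lam * vnorm b.
Proof.
rewrite /mixed_obj /partial_obj col_mxKu col_mxKd -[X in X *m _]hsubmxK mul_row_col.
rewrite opprD addrA; ring.
Qed.

Lemma X_inj (z1 z2 : 'cV[R]_(k + m)) : X *m z1 = X *m z2 -> z1 = z2.
Proof.
move=> h.
have hf : row_free X^T by rewrite /row_free mxrank_tr hrank.
apply: (can_inj (@trmxK _ _ _)); apply: (row_free_inj hf).
by rewrite -!trmx_mul h.
Qed.

Lemma opt_nec b : usubmx beta = b ->
  exists2 e : 'cV[R]_k, vnorm e <= 1 &
    dot e b = vnorm b /\ X1^T *m r b = (n%:R * lam) *: e.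
Proof.
move=> hb.
set gs := dsubmx beta.
have eb : beta = col_mx b gs by rewrite -hb vsubmxK.
have hgs : forall g, partial_obj X y lam b gs <= partial_obj X y lam b g.
  move=> g; have := hbeta (col_mx b g); rewrite eb !mixed_split lerD2r //.
have efit : X2 *m gs = X2 *m gam b.
  apply: (@uniq_fit _ _ _ _ (y - X1 *m b) (fun z => lam * l1norm z) gs (gam b) n0).
  - by apply: conv_scale (ltW l0) (@conv_l1 _ _).
  - exact: hgs.
  - exact: (hgam b).
have hbmin : forall b', Qf (y - X2 *m gs) X1 b + lam * vnorm b <=
                       Qf (y - X2 *m gs) X1 b' + lam * vnorm b'.
  move=> b'; have := hbeta (col_mx b' gs); rewrite eb !mixed_split /partial_obj /Qf.
  rewrite -/X1 -/X2 !(addrAC y (- (X1 *m _))).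
  move=> h; rewrite -(lerD2r (lam * l1norm gs)).
  by rewrite !(addrAC _ (lam * l1norm gs)) in h.
have vi := var_ineq n0 (conv_scale (ltW l0) (@conv_vnorm _ _)) hbmin.
have er : y - X2 *m gs - X1 *m b = r b by rewrite /r efit addrAC.
rewrite er in vi.
set w := (n%:R)^-1 *: (X1^T *m r b).
have hw : forall b', dot w (b' - b) <= lam * vnorm b' - lam * vnorm b.
  by move=> b'; rewrite /w dotZl dot_tr; apply: vi.
have [hwb hwn] := subgrad l0 hw.
have nN : (n%:R : R) != 0 by rewrite pnatr_eq0 -lt0n.
have lN : lam != 0 by rewrite gt_eqF.
exists (lam^-1 *: w).
  rewrite vnormZ ger0_norm ?invr_ge0 ?(ltW l0) //.
  by rewrite mulrC ler_pdivrMr // mul1r.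
split; first by rewrite dotZl hwb mulKf.
by rewrite /w !scalerA mulrA mulfK // mulfV // scale1r.
Qed.

Lemma opt_suff b (e : 'cV[R]_k) : vnorm e <= 1 -> dot e b = vnorm b ->
  X1^T *m r b = (n%:R * lam) *: e -> usubmx beta = b.
Proof.
move=> e1 eb hX.
set g0 := gam b.
have vi := var_ineq n0 (conv_scale (ltW l0) (@conv_l1 _ _)) (hgam b).
have hN : 0 < (n%:R : R) by rewrite ltr0n.
have nN : (n%:R : R) != 0 by rewrite gt_eqF.
have hmin : forall z, mixed_obj X y lam (col_mx b g0) <= mixed_obj X y lam z.
  move=> z; rewrite -(vsubmxK z); set b' := usubmx z; set g' := dsubmx z.
  rewrite !mixed_split /partial_obj.
  have hd : y - X1 *m b' - X2 *m g' = r b - (X1 *m (b' - b) + X2 *m (g' - g0)).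
    rewrite /r -/g0 !mulmxBr.
    apply/matrixP => i j; rewrite !mxE; ring.
  rewrite -/X1 -/X2 hd -/g0.
  have erb : y - X1 *m b - X2 *m g0 = r b by [].
  rewrite erb.
  have v1 := vi g'; rewrite -/X1 -/X2 -/g0 erb in v1.
  have c1 : dot (r b) (X1 *m (b' - b)) <= n%:R * lam * (vnorm b' - vnorm b).
    rewrite -dot_tr hX dotZl dotBr eb ler_wpM2l ?mulr_ge0 ?ler0n ?(ltW l0) //.
    rewrite lerD2r; apply: le_trans (CS _ _) _.
    by rewrite ler_piMl ?vnorm_ge0.
  move: v1 c1; move: (r b) (X1 *m (b' - b)) (X2 *m (g' - g0)) => rr d1 d2 v1 c1.
  rewrite !vnorm2 dotBl !dotBr !dotDl !dotDr.
  set iN := (n%:R : R)^-1 in v1 *.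
  have hiN : 0 < iN by rewrite invr_gt0.
  have h2 : (2 * (n%:R : R))^-1 = iN / 2 by rewrite invfM mulrC.
  rewrite h2.
  have hdd := dot_ge0 (d1 + d2); rewrite dotDl !dotDr in hdd.
  have c1' : iN * dot rr d1 <= lam * (vnorm b' - vnorm b).
    have : iN * dot rr d1 <= iN * (n%:R * lam * (vnorm b' - vnorm b)) by rewrite ler_wpM2l ?(ltW hiN).
    by rewrite !mulrA mulVf // mul1r.
  rewrite (dotC d1 rr) (dotC d2 rr) (dotC d2 d1); rewrite (dotC d2 d1) in hdd.
  set DD := dot d1 d1 + dot d1 d2 + (dot d1 d2 + dot d2 d2) in hdd *.
  have hDD : 0 <= iN / 2 * DD by rewrite mulr_ge0 // divr_ge0 // ltW.
  set a1 := dot rr d1 in c1' *; set a2 := dot rr d2 in v1 *.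
  have ee : iN / 2 * (dot rr rr - (a1 + a2) - (a1 + a2 - DD)) =
     iN / 2 * dot rr rr - iN * a1 - iN * a2 + iN / 2 * DD by field.
  rewrite ee.
  lra.
have ueq := uniq_fit (c := y) n0
   (conv_scale (ltW l0) (conv_add (conv_usub (p2:=m) (@conv_vnorm _ _)) (conv_dsub (p1:=k) (@conv_l1 _ _))))
   hbeta hmin.
by rewrite (X_inj ueq) col_mxKu.
Qed.

End Aux6.

Unset Implicit Arguments.
Unset Strict Implicit.

Theorem theoremC8 (R : realType) (n k m : nat)
  (X : 'M[R]_(n, k + m)) (y : 'cV[R]_n) (lam : R)
  (V : 'M[R]_(n, k + (n - (k + m))))
  (beta : 'cV[R]_(k + m)) (gam : 'cV[R]_k -> 'cV[R]_m) :
  (k + m <= n)%N ->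
  \rank X = (k + m)%N ->
  (0 < k)%N -> (0 < m)%N ->
  0 < lam ->
  let P := Pminus X k in
  let sigma := vnorm ((1%:M - P) *m y) in
  0 < sigma ->
  (* V : orthonormal columns spanning the orthogonal complement of col(X_{-1:k}) *)
  V^T *m V = 1%:M ->
  (V^T == kermx (rsubmx X))%MS ->
  (* first k columns of V *)
  (forall c : 'I_k,
     col (lshift _ c) V =
       (vnorm ((1%:M - Pminus X c.+1) *m col (lshift m c) X))^-1
         *: ((1%:M - Pminus X c.+1) *m col (lshift m c) X)) ->
  (* beta = hat beta^lambda, gam b = hat beta^lambda_{-1:k}(b) *)
  is_argmin (mixed_obj X y lam) beta ->
  (forall b : 'cV[R]_k, is_argmin (partial_obj X y lam b) (gam b)) ->
  let yhat := P *m y in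
  let u1 := sigma^-1 *: usubmx (V^T *m (y - yhat)) in
  let Lam := fun (b eps : 'cV[R]_k) =>
    sigma^-1 *: (invmx ((lsubmx X)^T *m lsubmx V) *m
      (- ((lsubmx X)^T *m (yhat - lsubmx X *m b - rsubmx X *m gam b))
       + (n%:R * lam) *: eps)) in
  forall b : 'cV[R]_k,
    usubmx beta = b <->
    (if b != 0 then u1 = Lam b ((vnorm b)^-1 *: b)
     else exists2 eps : 'cV[R]_k, vnorm eps <= 1 & u1 = Lam 0 eps).
Proof.
move=> hkmn hrank k0 m0 l0 P sigma s0 hVV hVker hcol hbeta hgam yhat u1 Lam b.
have n0 : (0 < n)%N by lia.
have hVX : V^T *m rsubmx X = 0 by apply/sub_kermxP; case/andP: hVker.
have [hV11 hV12 _ _] := Vblocks hVV.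
have [hV1X _] := VXblocks hVX.
have hX1V2 := X1V2 hVV hVX hcol.
have hV1sub := V1_sub hcol.
set X1 := lsubmx X in hV1X hX1V2 Lam *.
set X2 := rsubmx X in hVX hV1X hVker Lam *.
set V1 := lsubmx V in hV11 hV12 hV1X hX1V2 hV1sub Lam *.
have Mu : (X1^T *m V1) \in unitmx.
  apply: inj_unit_col => v hv.
  set z := V1 *m v.
  have hX2V1 : X2^T *m V1 = 0 by rewrite -[V1]trmxK -trmx_mul hV1X trmx0.
  have hXz : X^T *m z = 0.
    rewrite -[X]hsubmxK tr_row_mx mul_col_mx; apply/eqP; rewrite col_mx_eq0.
    by rewrite /z !mulmxA -/X1 -/X2 hv hX2V1 mul0mx !eqxx.
  case/submxP: hV1sub => D hD.
  have eV1 : V1 = X *m D^T by rewrite -[V1]trmxK hD trmx_mul trmxK.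
  have hz0 : z = 0.
    apply: dot_eq0.
    by rewrite {2}/z eV1 -mulmxA -dot_tr hXz dotC dot0r.
  by rewrite -[v]mul1mx -hV11 -mulmxA -/z hz0 mulmx0.
have ew : y - yhat = (1%:M - P) *m y by rewrite /yhat mulmxBl mul1mx.
have hPX2 : P *m X2 = X2.
  have eA : rsubmx (colmask (fun j : 'I_(k + m) => (k <= j)%N) X) = X2.
    by apply/matrixP => i j; rewrite !mxE /= leq_addr.
  by rewrite /P /Pminus -{1}eA mulmx_rsub oproj_fix eA.
have PT : P^T = P by rewrite /P /Pminus oproj_sym.
have hwX : (y - yhat)^T *m X2 = 0.
  by rewrite ew trmx_mul -mulmxA linearB /= trmx1 PT mulmxBl mul1mx hPX2 subrr mulmx0.
have [a ea] : exists a, y - yhat = V *m a.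
  have : ((y - yhat)^T <= V^T)%MS.
    apply: submx_trans _ (proj2 (andP hVker)); exact/sub_kermxP.
  case/submxP => D hD; exists D^T.
  by rewrite -[y - yhat]trmxK hD trmx_mul trmxK.
have eua : usubmx (V^T *m (y - yhat)) = usubmx a by rewrite ea mulmxA hVV mul1mx.
have key : X1^T *m (y - yhat) = (X1^T *m V1) *m usubmx a.
  rewrite ea -{1}[V]hsubmxK -{1}[a]vsubmxK mul_row_col mulmxDr !mulmxA -/V1 hX1V2.
  by rewrite mul0mx addr0.
have EQ : forall b' e, u1 = Lam b' e <->
    X1^T *m (y - X1 *m b' - X2 *m gam b') = (n%:R * lam) *: e.
  move=> b' e; rewrite /u1 /Lam eua.
  set T := X1^T *m (yhat - X1 *m b' - X2 *m gam b').
  have eR : X1^T *m (y - X1 *m b' - X2 *m gam b') = X1^T *m V1 *m usubmx a + T.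
    rewrite -key /T -mulmxDr; congr (_ *m _).
    by apply/matrixP => i j; rewrite !mxE; ring.
  rewrite eR; set M := X1^T *m V1; set ua := usubmx a.
  have sN : sigma^-1 != 0 by rewrite invr_eq0 gt_eqF.
  split => h.
    have h' : ua = invmx M *m (- T + (n%:R * lam) *: e) by apply: (scalerI sN).
    by rewrite h' mulKVmx // addrAC addNr add0r.
  congr (_ *: _).
  have hM : M *m ua = - T + (n%:R * lam) *: e by rewrite -h addrC addrK.
  by rewrite -hM mulKmx.
case: (eqVneq b 0) => [->|bnz].
  rewrite ?eqxx /=; split.
    move=> hb; have [e e1 [_ hX]] := opt_nec n0 l0 hbeta hgam hb.
    by exists e => //; apply/EQ.
  case=> e e1 /EQ hX.
  by apply: (opt_suff n0 l0 hrank hbeta hgam e1 _ hX); rewrite dot0r vnorm0.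
rewrite /=; split.
  move=> hb; have [e e1 [eb hX]] := opt_nec n0 l0 hbeta hgam hb.
  by apply/EQ; rewrite -(eps_unique bnz e1 eb).
move/EQ => hX.
have s0' : vnorm b != 0 by apply: contra bnz => /eqP h; rewrite (vnorm_eq0 h).
apply: (opt_suff n0 l0 hrank hbeta hgam _ _ hX).
  by rewrite vnormZ ger0_norm ?invr_ge0 ?vnorm_ge0 // mulVf.
by rewrite dotZl -vnorm2 expr2 mulKf.
Qed.
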